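(* Let $G$ be a weighted voting game on players $N=\{1,\dots,n\}$ with characteristic function $v$. Then there exists a weighted representation $[q;w_1,\dots,w_n]$ of $G$ such that for all coalitions $C\neq C'$ with $v(C)=v(C')=1$ we have $\sum_{i\in C}w_i\neq\sum_{i\in C'}w_i$.
   Context: A simple game on $N$ is a function $v:2^N\to\{0,1\}$. It is a weighted voting game if there are $q\ge0$ and $w_1,\dots,w_n\ge0$ such that for all $S\subseteq N$: $v(S)=1\iff\sum_{j\in S}w_j\ge q$; such a vector $[q;w_1,\dots,w_n]$ is a weighted representation. *)

(* Defs.v *)
From mathcomp Require Import all_boot all_order all_algebra.
From mathcomp Require Import reals.
Set Implicit Arguments. Unset Strict Implicit. Unset Printing Implicit Defensive.
Import Order.TTheory GRing.Theory Num.Theory.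
Local Open Scope ring_scope.

(* Players N = {1..n} are represented by 'I_n; coalitions by {set 'I_n}.
   A simple game is v : {set 'I_n} -> bool  (true = 1, false = 0). *)

Definition weighted_rep (R : realType) (n : nat) (v : {set 'I_n} -> bool)
    (q : R) (w : 'I_n -> R) : Prop :=
  0 <= q /\ (forall i, 0 <= w i) /\
  (forall S : {set 'I_n}, v S = true <-> q <= \sum_(j in S) w j).

Definition weighted_voting_game (R : realType) (n : nat)
    (v : {set 'I_n} -> bool) : Prop :=
  exists (q : R) (w : 'I_n -> R), weighted_rep v q w.

(* Main.v *)
Require Import Defs.
From mathcomp Require Import all_boot all_order all_algebra.
From mathcomp Require Import reals.
From mathcomp Require Import zify ring lra.
Import Order.TTheory GRing.Theory Num.Theory.
Local Open Scope ring_scope.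

Lemma sum_rec (P : nat -> bool) m :
  (\sum_(j < m.+1 | P j) 2^j)%N = (\sum_(j < m | P j) 2^j + (if P m then 2^m else 0))%N.
Proof. by rewrite big_mkcond big_ord_recr /= -big_mkcond. Qed.

Lemma s_lt (P : nat -> bool) m : (\sum_(j < m | P j) 2^j < 2^m)%N.
Proof.
elim: m => [|m IH]; first by rewrite big_ord0.
rewrite sum_rec expnS.
move: IH; set s := (\sum_(j < m | P j) 2^j)%N.
case: (P m); lia.
Qed.

Lemma s_inj (P Q : nat -> bool) m :
  (\sum_(j < m | P j) 2^j)%N = (\sum_(j < m | Q j) 2^j)%N ->
  forall i, (i < m)%N -> P i = Q i.
Proof.
elim: m => [|m IH] E i Hi; first by [].
move: E; rewrite !sum_rec.
have h1 := s_lt P m; have h2 := s_lt Q m.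
move: h1 h2 (IH) ; set s1 := (\sum_(j < m | P j) 2^j)%N; set s2 := (\sum_(j < m | Q j) 2^j)%N.
move=> h1 h2 IH' .
case eP: (P m); case eQ: (Q m) => /= E.
- have {}E : s1 = s2 by lia.
  case: (ltngtP i m) => him; [exact: IH'| lia | by rewrite him eP eQ].
- lia.
- lia.
- have {}E : s1 = s2 by lia.
  case: (ltngtP i m) => him; [exact: IH'| lia | by rewrite him eP eQ].
Qed.

Definition Pc {n} (C : {set 'I_n}) (j : nat) : bool :=
  [exists i : 'I_n, (nat_of_ord i == j) && (i \in C)].

Lemma PcE n (C : {set 'I_n}) (j : 'I_n) : Pc C j = (j \in C).
Proof.
apply/existsP/idP => [[i /andP[/eqP e iC]]|jC].
  by have -> : j = i by apply: val_inj.
by exists j; rewrite eqxx jC.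
Qed.

Definition B {n} (C : {set 'I_n}) : nat := (\sum_(i in C) 2^i)%N.

Lemma BE n (C : {set 'I_n}) : B C = (\sum_(j < n | Pc C j) 2^j)%N.
Proof. by rewrite /B; apply: eq_bigl => j; rewrite PcE. Qed.

Lemma B_lt n (C : {set 'I_n}) : (B C < 2^n)%N.
Proof. by rewrite BE s_lt. Qed.

Lemma B_inj n (C C' : {set 'I_n}) : B C = B C' -> C = C'.
Proof.
rewrite !BE => E; apply/setP => i.
rewrite -!PcE; exact: (@s_inj (Pc C) (Pc C') n E i (ltn_ord i)).
Qed.
Theorem lemma6 (R : realType) (n : nat) (v : {set 'I_n} -> bool) :
  weighted_voting_game R v ->
  exists (q : R) (w : 'I_n -> R),
    weighted_rep v q w /\
    (forall C C' : {set 'I_n}, C <> C' -> v C = true -> v C' = true ->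
       \sum_(i in C) w i <> \sum_(i in C') w i).
Proof.
move=> [q [w [q0 [w0 hv]]]].
pose g (S : {set 'I_n}) := q - \sum_(j in S) w j.
pose gam := \big[Order.min/1]_(S | ~~ v S) g S.
have gam0 : 0 < gam.
  rewrite /gam; apply: (big_ind (fun x => 0 < x)) => //.
    by move=> x y hx hy; rewrite lt_min hx hy.
  move=> S /negbTE vS; rewrite /g subr_gt0 ltNge; apply/negP => h.
  by move: (proj2 (hv S) h); rewrite vS.
have gamle : forall S, ~~ v S -> gam <= g S.
  by move=> S vS; rewrite /gam (bigD1 S) //= ge_min lexx.
pose N : R := (2^n)%:R.
have N0 : 0 < N by rewrite /N ltr0n expn_gt0.
pose delta := gam / (2 * N).
have delta0 : 0 < delta by rewrite /delta divr_gt0 // mulr_gt0.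
pose t (k : nat) := delta / (k.+1)%:R.
have tpos : forall k, 0 < t k by move=> k; rewrite /t divr_gt0 // ltr0Sn.
have tN : forall k, t k * N < gam.
  move=> k.
  have -> : t k * N = gam / (2 * (k.+1)%:R).
    rewrite /t /delta; field.
    by apply/andP; split; apply/negP => /eqP; [have := ler0n R k | have := N0; rewrite /N]; lra.
  have k1 : 1 <= (k.+1)%:R :> R by rewrite ler1n.
  rewrite ltr_pdivrMr; last by lra.
  by rewrite ltr_pMr //; lra.
have tinj : forall k k' : nat, t k = t k' -> k = k'.
  move=> k k' e.
  have h1 : (k.+1)%:R = delta / t k :> R.
    by rewrite /t; field; apply/andP; split; apply/negP => /eqP; [have := ler0n R k | idtac]; lra.
  have h2 : (k'.+1)%:R = delta / t k' :> R.
    by rewrite /t; field; apply/andP; split; apply/negP => /eqP; [have := ler0n R k' | idtac]; lra.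
  by move: h1; rewrite e -h2 => /eqP; rewrite eqr_nat eqSS => /eqP.
pose T := ({set 'I_n} * {set 'I_n})%type.
pose M := #|{: T}|.
pose a (p : T) := \sum_(i in p.1) w i - \sum_(i in p.2) w i.
pose d (p : T) := (B p.1)%:R - (B p.2)%:R : R.
pose bad (p : T) (k : 'I_M.+1) := (p.1 != p.2) && (a p + t k * d p == 0).
have buniq : forall p k k', bad p k -> bad p k' -> k = k'.
  move=> p k k' /andP[ne /eqP e1] /andP[_ /eqP e2].
  have dne : d p != 0.
    apply/negP => /eqP; rewrite /d => /eqP; rewrite subr_eq0 eqr_nat => /eqP.
    by move/B_inj => h; move: ne; rewrite h eqxx.
  apply: val_inj; apply: tinj.
  apply: (mulIf dne); apply: (addrI (a p)); by rewrite e1 e2.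
have [k hk] : exists k : 'I_M.+1, forall p, ~~ bad p k.
  case: (boolP [exists k, [forall p, ~~ bad p k]]) => [/existsP[k /forallP hk]|].
    by exists k.
  rewrite negb_exists => /forallP hall.
  have allb : forall k, exists p, bad p k.
    move=> k; move: (hall k); rewrite negb_forall => /existsP[p].
    by rewrite negbK; exists p.
  pose f p := odflt ord0 [pick k | bad p k].
  have sub : [set: 'I_M.+1] \subset f @: [set: T].
    apply/subsetP => k _; have [p bp] := allb k; apply/imsetP; exists p => //.
    rewrite /f; case: pickP => [k' bk' | /(_ k)]; last by rewrite bp.
    by rewrite /= (buniq _ _ _ bp bk').
  have := subset_leq_card sub; rewrite cardsT card_ord.
  have := leq_imset_card f [set: T]; rewrite cardsT -/M.
  by move=> h1 h2; have := leq_trans h2 h1; rewrite ltnn.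
have sumE : forall S : {set 'I_n},
    \sum_(i in S) (w i + t k * (2^i)%:R) = \sum_(i in S) w i + t k * (B S)%:R.
  by move=> S; rewrite big_split /= -mulr_sumr /B natr_sum.
exists q, (fun i => w i + t k * (2^i)%:R); split.
  split => //; split.
    by move=> i; rewrite addr_ge0 // mulr_ge0 // ltW.
  move=> S; rewrite sumE; split.
    move=> /(proj1 (hv S)) h.
    have : 0 <= t k * (B S)%:R by rewrite mulr_ge0 // ltW.
    lra.
  move=> h; case vS: (v S) => //.
  have g1 := gamle S (negbT vS).
  have b1 : (B S)%:R <= N by rewrite /N ler_nat ltnW // B_lt.
  have b2 : t k * (B S)%:R <= t k * N by rewrite ler_wpM2l // ltW.
  have := tN k; move: g1; rewrite /g; lra.
move=> C C' ne vC vC' e.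
have := hk (C, C'); rewrite /bad /= /a /d /=.
have -> : (C != C') by apply/eqP.
rewrite /=; apply/negP; rewrite negbK; apply/eqP.
move: e; rewrite !sumE mulrBr; lra.
Qed.
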